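(* Let $A$ be an integral domain and $B$ an overring of $A$ that is well-centered on $A$. If there exist finitely many valuation overrings $V_1,\dots,V_n$ of $A$ such that $A=B\cap V_1\cap\cdots\cap V_n$, then $B$ is a localization of $A$.
   Context: For an integral domain $A$ with field of fractions $K$, an overring is a subring of $K$ containing $A$; a valuation overring is an overring that is a valuation domain. $B$ is well-centered on $A$ if for each $b\in B$ there is a unit $u$ of $B$ with $ub\in A$. $B$ is a localization of $A$ if $B=S^{-1}A$ for a multiplicatively closed set $S$ of nonzero elements of $A$. *)

(* Defs.v *)
From HB Require Import structures.
From mathcomp Require Import all_boot all_algebra.
Set Implicit Arguments. Unset Strict Implicit. Unset Printing Implicit Defensive.
Import GRing.Theory.
Local Open Scope ring_scope.

(* All rings are subrings of a fixed field K; sets are Prop-valued predicates on K. *)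
Section Defs.
Variable K : fieldType.

Definition is_subring (R : K -> Prop) : Prop :=
  [/\ R 1, (forall x y, R x -> R y -> R (x - y)) & (forall x y, R x -> R y -> R (x * y))].

Definition is_fraction_field_of (A : K -> Prop) : Prop :=
  forall x : K, exists a b : K, [/\ A a, A b, b != 0 & x = a / b].

Definition overring (A B : K -> Prop) : Prop :=
  is_subring B /\ (forall x, A x -> B x).

(* V is a valuation domain (its fraction field is K, since it contains A) *)
Definition valuation_domain (V : K -> Prop) : Prop :=
  is_subring V /\ (forall x : K, x != 0 -> V x \/ V x^-1).

Definition valuation_overring (A V : K -> Prop) : Prop :=
  overring A V /\ valuation_domain V.

Definition unit_of (B : K -> Prop) (u : K) : Prop :=
  [/\ B u, u != 0 & B u^-1].

Definition well_centered (A B : K -> Prop) : Prop :=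
  forall b, B b -> exists u, unit_of B u /\ A (u * b).

Definition mult_closed_nonzero (A S : K -> Prop) : Prop :=
  [/\ (forall s, S s -> A s /\ s != 0), S 1 & (forall s t, S s -> S t -> S (s * t))].

Definition is_localization (A B : K -> Prop) : Prop :=
  exists S : K -> Prop, mult_closed_nonzero A S /\
    (forall x, B x <-> exists a s, [/\ A a, S s & x = a / s]).
End Defs.

(* Main.v *)
Require Import Defs.
From mathcomp Require Import all_boot all_algebra.
From mathcomp Require Import ring.
From Stdlib Require Import Classical.
Import GRing.Theory.
Local Open Scope ring_scope.

Lemma sr0 {K : fieldType} (R : K -> Prop) : is_subring R -> R 0.
Proof. case=> h1 hB _; rewrite -(subrr (1:K)); exact: hB. Qed.

Lemma srN {K : fieldType} (R : K -> Prop) x : is_subring R -> R x -> R (- x).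
Proof.
move=> hR hx; case: (hR) => _ hB _; rewrite -sub0r; apply: hB => //; exact: sr0.
Qed.

Lemma srD {K : fieldType} (R : K -> Prop) x y :
  is_subring R -> R x -> R y -> R (x + y).
Proof.
move=> hR hx hy; case: (hR) => _ hB _; rewrite -[y]opprK; apply: hB => //.
exact: srN.
Qed.

Lemma srM {K : fieldType} (R : K -> Prop) x y :
  is_subring R -> R x -> R y -> R (x * y).
Proof. by case=> _ _ hM; apply: hM. Qed.

Lemma sr1 {K : fieldType} (R : K -> Prop) : is_subring R -> R 1.
Proof. by case. Qed.

Lemma srX {K : fieldType} (R : K -> Prop) x N :
  is_subring R -> R x -> R (x ^+ N).
Proof.
move=> hR hx; elim: N => [|N IH]; first by rewrite expr0; exact: sr1.
by rewrite exprS; apply: srM.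
Qed.

Fixpoint geo {K : fieldType} (b : K) (N : nat) : K :=
  if N is N'.+1 then 1 + b * geo b N' else 0.

Lemma geoD {K : fieldType} (b : K) N M :
  geo b (N + M) = geo b N + b ^+ N * geo b M.
Proof.
elim: N => [|N IH]; first by rewrite add0n /= add0r expr0 mul1r.
rewrite addSn /= IH exprS mulrDr addrA mulrA; done.
Qed.

Lemma geo_in {K : fieldType} (R : K -> Prop) b N :
  is_subring R -> R b -> R (geo b N).
Proof.
move=> hR hb; elim: N => [|N IH] /=; first exact: sr0.
apply: srD => //; first exact: sr1. exact: srM.
Qed.

Definition unitV {K : fieldType} (V : K -> Prop) (x : K) :=
  [/\ x != 0, V x & V x^-1].
Definition mV {K : fieldType} (V : K -> Prop) (x : K) := V x /\ ~ unitV V x.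

Lemma unit1 {K : fieldType} (V : K -> Prop) : is_subring V -> unitV V 1.
Proof. move=> hV; split; [exact: oner_neq0 | exact: sr1 | rewrite invr1; exact: sr1]. Qed.

Lemma unit_or_m {K : fieldType} {V : K -> Prop} {x} : V x -> unitV V x \/ mV V x.
Proof. move=> hx; case: (classic (unitV V x)) => h; [by left | by right]. Qed.

Lemma mM {K : fieldType} (V : K -> Prop) x r :
  is_subring V -> mV V x -> V r -> mV V (r * x).
Proof.
move=> hV [hx hnu] hr; split; first exact: srM.
case=> nz _ hi; apply: hnu; split => //.
- by apply: contraNneq nz => ->; rewrite mulr0.
- have -> : x^-1 = r * (r * x)^-1.
    have hr0 : r != 0 by apply: contraNneq nz => ->; rewrite mul0r.
    have hx0 : x != 0 by apply: contraNneq nz => ->; rewrite mulr0.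
    field; by rewrite hr0 hx0.
  exact: srM.
Qed.

Lemma mD {K : fieldType} (V : K -> Prop) x y :
  valuation_domain V -> mV V x -> mV V y -> mV V (x + y).
Proof.
move=> [hV hval] [hx hnx] [hy hny]; split; first exact: srD.
case=> nz _ hi.
have hx0 : x != 0.
  apply/negP => /eqP ex; apply: hny; split => //; first by move: nz; rewrite ex add0r.
  by move: hi; rewrite ex add0r.
have hy0 : y != 0.
  apply/negP => /eqP ey; apply: hnx; split => //.
  by move: hi; rewrite ey addr0.
have hxy : x / y != 0 by rewrite mulf_neq0 // invr_eq0.
case: (hval _ hxy) => h.
- apply: hny; split => //.
  have -> : y^-1 = (x / y + 1) * (x + y)^-1 by field; rewrite hy0 nz.
  apply: srM => //; apply: srD => //; exact: sr1.
- apply: hnx; split => //.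
  have -> : x^-1 = ((x / y)^-1 + 1) * (x + y)^-1 by field; rewrite hy0 hx0 nz.
  apply: srM => //; apply: srD => //; exact: sr1.
Qed.

Lemma unitDm {K : fieldType} (V : K -> Prop) u y :
  valuation_domain V -> unitV V u -> mV V y -> unitV V (u + y).
Proof.
move=> hVV hu hy; have hV := hVV.1.
have Vuy : V (u + y) by apply: srD => //; [case: hu | case: hy].
case: (unit_or_m Vuy) => // hm; exfalso.
have : mV V ((u + y) + (-1) * y).
  apply: mD => //; apply: mM => //; apply: srN => //; exact: sr1.
rewrite mulN1r addrK; by case=> _; apply.
Qed.

Lemma geo_mult {K : fieldType} (V : K -> Prop) b N :
  valuation_domain V -> V b -> mV V (geo b N) ->
  forall a, mV V (geo b (N * a.+1)).
Proof.
move=> hVV hb hN; elim=> [|a IH]; first by rewrite muln1.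
rewrite mulnS geoD; apply: mD => //; apply: mM => //; first exact: hVV.1.
exact: srX hVV.1 hb.
Qed.

Lemma geo_inv {K : fieldType} {V : K -> Prop} {b c} :
  valuation_domain V -> mV V c -> c * b = 1 ->
  forall M, unitV V (c ^+ M * geo b M.+1).
Proof.
move=> hVV hc hcb; elim=> [|M IH].
  rewrite expr0 mul1r /= mulr0 addr0; exact: unit1 hVV.1.
have -> : c ^+ M.+1 * geo b M.+2 = c ^+ M * geo b M.+1 + c ^+ M * c.
  rewrite [geo b M.+2]/= exprSr mulrDr mulr1 mulrA -(mulrA _ c b) hcb mulr1.
  by rewrite addrC.
apply: unitDm => //; apply: mM => //; first exact: hVV.1.
exact: srX hVV.1 hc.1.
Qed.

Lemma pick_N {K : fieldType} (b : K) {n} {V : 'I_n -> K -> Prop} :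
  (forall i, valuation_domain (V i)) ->
  exists N, (0 < N)%N /\ forall i, V i b ->
    (exists N', (0 < N')%N /\ mV (V i) (geo b N')) -> mV (V i) (geo b N).
Proof.
move=> hV.
suff H : forall m, exists N, (0 < N)%N /\ forall i : 'I_n, (i < m)%N -> V i b ->
    (exists N', (0 < N')%N /\ mV (V i) (geo b N')) -> mV (V i) (geo b N).
  have [N [N0 HN]] := H n; exists N; split => // i; exact: HN.
elim=> [|m [N [N0 HN]]]; first by exists 1%N.
case: (ltnP m n) => hm; last first.
  exists N; split => // i hi; apply: HN; exact: leq_trans (ltn_ord i) hm.
pose i0 := Ordinal hm.
case: (classic (V i0 b /\ exists N', (0 < N')%N /\ mV (V i0) (geo b N'))).
- move=> [Vb [N' [N'0 hN']]]; exists (N * N')%N; split; first by rewrite muln_gt0 N0 N'0.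
  move=> i; rewrite ltnS leq_eqVlt; case/orP => [/eqP him | him] Vib hex.
  + have -> : i = i0 by apply: val_inj.
    case: N N0 {HN} => [//|N''] _; rewrite mulnC; exact: geo_mult.
  + case: N' N'0 {hN'} => [//|N''] _; apply: geo_mult => //; exact: HN.
- move=> hno; exists N; split => // i; rewrite ltnS leq_eqVlt.
  case/orP => [/eqP him | him] Vib hex; last exact: HN.
  exfalso; apply: hno; have -> : i0 = i by apply: val_inj.
  by split.
Qed.

Theorem theorem4p13 (K : fieldType) (A B : K -> Prop) (n : nat)
    (V : 'I_n -> K -> Prop) :
  is_subring A -> is_fraction_field_of A ->
  overring A B -> well_centered A B ->
  (forall i, valuation_overring A (V i)) ->
  (forall x, A x <-> (B x /\ forall i, V i x)) ->
  is_localization A B.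
Proof.
move=> hA _ [hB hAB] hwc hVo hAeq.
have hV : forall i, valuation_domain (V i) by move=> i; exact: (hVo i).2.
pose S := fun s => [/\ A s, s != 0 & B s^-1].
have key : forall b, B b -> exists u, S u /\ A (u * b).
  move=> b Bb.
  case: (classic (A b)) => [Ab|nAb].
    exists 1; split; last by rewrite mul1r.
    split; [exact: sr1 | exact: oner_neq0 | rewrite invr1; exact: sr1].
  have [i0 ni0] : exists i, ~ V i b.
    apply: NNPP => hn; apply: nAb; rewrite hAeq; split => // i.
    by apply: NNPP => h; apply: hn; exists i.
  have [N [N0 HN]] := pick_N b hV.
  pose x := geo b N.+1.
  have Gi : forall i, [/\ x != 0, V i x^-1 & V i (b * x^-1)].
    move=> i; have hVi := (hV i).1.
    case: (classic (V i b)) => Vb.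
    - have ux : unitV (V i) x.
        case: (classic (exists N', (0 < N')%N /\ mV (V i) (geo b N'))) => hex.
        + have hm := HN i Vb hex.
          rewrite /x /=; apply: unitDm => //; first exact: unit1.
          exact: mM.
        + have Vx : V i x by exact: geo_in.
          case: (unit_or_m Vx) => // hm; exfalso; apply: hex; by exists N.+1.
      case: ux => xnz _ xi; split => //; exact: srM.
    - have b0 : b != 0 by apply: contra_notN Vb => /eqP ->; exact: sr0.
      have Vc : V i b^-1 by case: ((hV i).2 b b0).
      have mc : mV (V i) b^-1.
        split => //; case=> _ _; rewrite invrK; exact: Vb.
      have cb : b^-1 * b = 1 by rewrite mulVf.
      have [wnz _ wi] := geo_inv (hV i) mc cb N.
      have xnz : x != 0 by apply: contraNneq wnz; rewrite -/x => ->; rewrite mulr0.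
      have y0 : b^-1 ^+ N != 0 by rewrite expf_neq0 // invr_eq0.
      split => //.
      + have -> : x^-1 = b^-1 ^+ N * (b^-1 ^+ N * geo b N.+1)^-1.
          rewrite /x; field; by rewrite y0 xnz.
        by apply: srM => //; exact: srX.
      + move: wi wnz; rewrite /x; clear xnz; case: N N0 {HN y0 x} => [//|N'] _.
        rewrite exprS; set y := b^-1 ^+ N'; set g := geo b N'.+2; move=> wi wnz.
        have y0 : y != 0 by rewrite expf_neq0 // invr_eq0.
        have g0 : g != 0 by apply: contraNneq wnz => ->; rewrite mulr0.
        have -> : b * g^-1 = y * (b^-1 * y * g)^-1 by field; rewrite b0 y0 g0.
        by apply: srM => //; exact: srX.
  have [xnz _ _] := Gi i0.
  have Bx : B x by exact: geo_in.
  have [u [[Bu unz Bui] Aux]] := hwc x Bx.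
  have [Bux Vux] := (hAeq _).1 Aux.
  exists u; split; first split => //.
  - rewrite hAeq; split => // i.
    have [_ h1 _] := Gi i.
    have -> : u = (u * x) * x^-1 by rewrite mulfK.
    apply: srM (Vux i) h1; exact: (hV i).1.
  - rewrite hAeq; split; first exact: srM.
    move=> i; have [_ _ h2] := Gi i.
    have -> : u * b = (u * x) * (b * x^-1) by field; rewrite xnz.
    apply: srM (Vux i) h2; exact: (hV i).1.
exists S; split.
- split.
  + by move=> s [].
  + split; [exact: sr1 | exact: oner_neq0 | rewrite invr1; exact: sr1 hB].
  + move=> s t [As s0 Bs] [At t0 Bt]; split.
    * exact: srM.
    * by rewrite mulf_neq0.
    * rewrite invfM; exact: srM hB Bs Bt.
- move=> y; split.
  + move=> By; have [u [[Au u0 Bu] Aub]] := key y By.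
    exists (u * y), u; split => //.
    by field; rewrite u0.
  + move=> [a [s [Aa [As s0 Bs] ->]]].
    apply: srM hB _ Bs; exact: hAB.
Qed.
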